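(* Let $H$ be a finite simple undirected graph on $n\ge 2$ vertices, and let $\lambda_1(H)\ge\cdots\ge\lambda_n(H)$ be the eigenvalues of its adjacency matrix. Then \[ \lambda_{n-1}(H)\ge -\frac{n}{3}. \] *)

(* Defs.v *)
From HB Require Import structures.
From mathcomp Require Import all_boot all_order all_algebra.
From mathcomp Require Import reals.
Set Implicit Arguments. Unset Strict Implicit. Unset Printing Implicit Defensive.
Import Order.TTheory GRing.Theory Num.Theory.
Local Open Scope ring_scope.

(* A finite simple undirected graph on vertex set 'I_n is a relation
   e : rel 'I_n that is symmetric and irreflexive. Its adjacency matrix: *)
Definition adjmx (R : nzRingType) (n : nat) (e : rel 'I_n) : 'M[R]_n :=
  \matrix_(i, j) (e i j)%:R.

(* s is the list of eigenvalues (with multiplicity) of A: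
   the characteristic polynomial of A splits with roots s. *)
Definition eigenvalue_list (R : comNzRingType) (n : nat) (A : 'M[R]_n) (s : seq R) : Prop :=
  char_poly A = \prod_(x <- s) ('X - x%:P).

(* Main.v *)
Require Import Defs.
From HB Require Import structures.
From mathcomp Require Import all_boot all_order all_algebra.
From mathcomp Require Import reals.
From mathcomp Require Import ring lra.
From mathcomp Require Import complex.
From mathcomp Require Import zify.
Import Order.TTheory GRing.Theory Num.Theory.
Local Open Scope ring_scope.
Section L.
Variable R : rcfType.

Lemma cs_ineq (a b c e : R) : (a*c + b*e)^+2 <= (a^+2+b^+2)*(c^+2+e^+2).
Proof. have : 0 <= (a*e - b*c)^+2 by apply: sqr_ge0. nra. Qed.

Lemma poly_key (x t : R) : 0 <= x -> x <= t ->
  18 * x * t^+3 <= 4 * t^+4 + 22 * x^+2 * t^+2 - 8 * x^+4.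
Proof.
move=> h0 h1.
have e : 4 * t^+4 + 22 * x^+2 * t^+2 - 8 * x^+4 - 18 * x * t^+3 =
   2 * (2*x - t)^+2 * (t - x) * (x + 2 * t) by ring.
rewrite -subr_ge0 e; apply: mulr_ge0; last lra.
apply: mulr_ge0; last lra. apply: mulr_ge0; [lra|apply: sqr_ge0].
Qed.

Definition rr (a b : R) := Num.sqrt (a^+2 + b^+2).
Definition E1 (a b : R) := (a^+2 - b^+2) / rr a b.
Definition E2 (a b : R) := (2 * a * b) / rr a b.
Definition F1 (a b : R) := (a^+4 - 6 * a^+2 * b^+2 + b^+4) / rr a b ^+ 3.
Definition F2 (a b : R) := (4 * a^+3 * b - 4 * a * b^+3) / rr a b ^+ 3.

Lemma rr_sq a b : rr a b ^+ 2 = a^+2 + b^+2.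
Proof. rewrite /rr sqr_sqrtr //; apply: addr_ge0; apply: sqr_ge0. Qed.

Lemma rr_ge0 a b : 0 <= rr a b.
Proof. exact: sqrtr_ge0. Qed.

Lemma rr0 a b : rr a b = 0 -> a = 0 /\ b = 0.
Proof.
move=> h; have := rr_sq a b; rewrite h expr0n /= => /esym/eqP.
rewrite paddr_eq0 ?sqr_ge0 // !sqrf_eq0 => /andP[/eqP -> /eqP ->]; by [].
Qed.

Lemma pointwise (a b c e : R) :
  18 * `|a * c + b * e| <= 12 * (rr a b * rr c e)
     + 7 * (E1 a b * E1 c e + E2 a b * E2 c e)
     - (F1 a b * F1 c e + F2 a b * F2 c e).
Proof.
have [h1|h1] := eqVneq (rr a b) 0.
  have [ea eb] := rr0 _ _ h1.
  rewrite /E1 /E2 /F1 /F2 h1 ea eb; rewrite !(mul0r, mulr0, expr0n, subrr, addr0, normr0, invr0) /=.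
  by [].
have [h2|h2] := eqVneq (rr c e) 0.
  have [ec ee] := rr0 _ _ h2.
  rewrite /E1 /E2 /F1 /F2 h2 ec ee; rewrite !(mul0r, mulr0, expr0n, subrr, addr0, normr0, invr0) /=.
  by [].
set p := a * c + b * e.
set t := rr a b * rr c e.
have tpos : 0 < t by rewrite mulr_gt0 // lt0r ?h1 ?h2 ?rr_ge0.
have t2 : t ^+ 2 = (a^+2 + b^+2) * (c^+2 + e^+2) by rewrite exprMn !rr_sq.
have I1 : E1 a b * E1 c e + E2 a b * E2 c e = (2 * p^+2 - t^+2) / t.
  rewrite t2 /E1 /E2 /t /p. field. by rewrite h1 h2.
have I2 : F1 a b * F1 c e + F2 a b * F2 c e =
   (8 * p^+4 - 8 * p^+2 * t^+2 + t^+4) / t^+3.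
  have t4 : t^+4 = (t^+2)^+2 by rewrite -exprM.
  rewrite t4 t2 /F1 /F2 /t /p. field. by rewrite h1 h2.
rewrite I1 I2.
have hp : `|p| <= t.
  have hx : `|p| ^+ 2 <= t ^+ 2 by rewrite real_normK ?num_real // t2; exact: cs_ineq.
  have := normr_ge0 p; nra.
have key := @poly_key _ _ (normr_ge0 p) hp.
have tne : t != 0 by rewrite gt_eqF.
have p2 : p ^+ 2 = `|p| ^+ 2 by rewrite real_normK ?num_real.
have p4 : p ^+ 4 = (`|p| ^+ 2) ^+ 2 by rewrite -p2 -exprM.
set x := `|p| in key hp p2 p4 *.
rewrite p4 p2.
have -> : 12 * t + 7 * ((2 * x ^+ 2 - t ^+ 2) / t) -
  (8 * (x ^+ 2) ^+ 2 - 8 * x ^+ 2 * t ^+ 2 + t ^+ 4) / t ^+ 3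
  = (4 * t^+4 + 22 * x^+2 * t^+2 - 8 * x^+4) / t^+3.
  field. exact: tne.
rewrite ler_pdivlMr ?exprn_gt0 //.
Qed.


Lemma sqsum n (f : 'I_n -> R) : (\sum_i f i) ^+ 2 = \sum_i \sum_j f i * f j.
Proof. by rewrite expr2 mulr_suml; apply: eq_bigr => i _; rewrite mulr_sumr. Qed.

Lemma cs_sum n (f : 'I_n -> R) : (\sum_i f i) ^+ 2 <= n%:R * \sum_i f i ^+ 2.
Proof.
have h : 0 <= \sum_i \sum_j (f i - f j) ^+ 2.
  by apply: sumr_ge0 => i _; apply: sumr_ge0 => j _; apply: sqr_ge0.
have e : \sum_i \sum_j (f i - f j) ^+ 2 =
   2 * (n%:R * \sum_i f i ^+ 2) - 2 * (\sum_i f i) ^+ 2.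
  have -> : \sum_i \sum_j (f i - f j) ^+ 2 =
     \sum_i (n%:R * f i ^+ 2 + \sum_j f j ^+ 2 - 2 * (f i * \sum_j f j)).
    apply: eq_bigr => i _.
    have -> : \sum_j (f i - f j) ^+ 2 = \sum_j (f i ^+ 2 + (f j ^+ 2 - 2 * (f i * f j))).
      by apply: eq_bigr => j _; ring.
    rewrite big_split sumrB /= sumr_const card_ord -mulr_natl -mulr_sumr -mulr_sumr.
    rewrite -mulr_natl; ring.
  rewrite sumrB big_split /= sumr_const card_ord -!mulr_sumr -mulr_suml.
  rewrite -mulr_natl; ring.
rewrite e subr_ge0 in h.
by rewrite -(ler_pM2l (x:=2)) //.
Qed.

Lemma lin5 m (A B C D E : 'I_m -> R) (a b : R) :
  \sum_i (a * A i + b * (B i + C i) - (D i + E i)) =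
  a * \sum_i A i + b * (\sum_i B i + \sum_i C i) - (\sum_i D i + \sum_i E i).
Proof. by rewrite sumrB big_split /= -!mulr_sumr !big_split. Qed.

Lemma main_L n (u v : 'I_n -> R) : \sum_i u i ^+ 2 = 1 -> \sum_i v i ^+ 2 = 1 ->
  \sum_i u i * v i = 0 ->
  \sum_i \sum_j `|u i * u j + v i * v j| <= 4 * n%:R / 3.
Proof.
move=> hu hv huv.
pose r i := rr (u i) (v i).
pose e1 i := E1 (u i) (v i). pose e2 i := E2 (u i) (v i).
pose f1 i := F1 (u i) (v i). pose f2 i := F2 (u i) (v i).
set T := \sum_i _.
have h1 : 18 * T <= \sum_i \sum_j (12 * (r i * r j) + 7 * (e1 i * e1 j + e2 i * e2 j)
     - (f1 i * f1 j + f2 i * f2 j)).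
  rewrite /T mulr_sumr; apply: ler_sum => i _; rewrite mulr_sumr; apply: ler_sum => j _.
  exact: pointwise.
have h2 : \sum_i \sum_j (12 * (r i * r j) + 7 * (e1 i * e1 j + e2 i * e2 j)
     - (f1 i * f1 j + f2 i * f2 j)) =
   12 * (\sum_i r i) ^+ 2 + 7 * ((\sum_i e1 i) ^+ 2 + (\sum_i e2 i) ^+ 2)
   - ((\sum_i f1 i) ^+ 2 + (\sum_i f2 i) ^+ 2).
  rewrite !sqsum -lin5; apply: eq_bigr => i _; by rewrite -lin5.
set X0 := \sum_i r i. set X1 := \sum_i e1 i. set X2 := \sum_i e2 i.
set S := X0 ^+ 2 + X1 ^+ 2 + X2 ^+ 2.
have rE1 i : r i * e1 i = u i ^+ 2 - v i ^+ 2.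
  rewrite /r /e1 /E1; have [h|h] := eqVneq (rr (u i) (v i)) 0.
    by have [ea eb] := rr0 _ _ h; rewrite h mul0r ea eb expr0n /= subr0.
  by rewrite mulrC divfK.
have rE2 i : r i * e2 i = 2 * u i * v i.
  rewrite /r /e2 /E2; have [h|h] := eqVneq (rr (u i) (v i)) 0.
    by have [ea eb] := rr0 _ _ h; rewrite h mul0r ea eb !mulr0.
  by rewrite mulrC divfK.
have Esq i : e1 i ^+ 2 + e2 i ^+ 2 = r i ^+ 2.
  rewrite /r /e1 /e2 /E1 /E2; have [h|h] := eqVneq (rr (u i) (v i)) 0.
    by rewrite h invr0 !mulr0 expr0n /= addr0.
  transitivity ((u i ^+ 2 + v i ^+ 2) ^+ 2 / rr (u i) (v i) ^+ 2).
    by field.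
  by rewrite -rr_sq; field.
have hr2 : \sum_i r i ^+ 2 = 2.
  rewrite /r; under eq_bigr do rewrite rr_sq.
  by rewrite big_split /= hu hv.
pose t i := r i * X0 + (e1 i * X1 + e2 i * X2).
have hSt : S = \sum_i t i.
  rewrite /t big_split /= big_split /= -!mulr_suml /S -/X0 -/X1 -/X2; ring.
have ht i : t i ^+ 2 <= r i ^+ 2 * S + 2 * X0 * (X1 * (u i ^+ 2 - v i ^+ 2) + X2 * (2 * u i * v i)).
  rewrite -rE1 -rE2 /t /S.
  have cs : (e1 i * X1 + e2 i * X2) ^+ 2 <= (e1 i ^+ 2 + e2 i ^+ 2) * (X1 ^+ 2 + X2 ^+ 2).
    exact: cs_ineq.
  rewrite Esq in cs.
  have e : (r i * X0 + (e1 i * X1 + e2 i * X2)) ^+ 2 =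
      r i ^+ 2 * X0 ^+ 2 + 2 * X0 * (X1 * (r i * e1 i) + X2 * (r i * e2 i))
      + (e1 i * X1 + e2 i * X2) ^+ 2 by ring.
  rewrite e; lra.
have hT2 : \sum_i t i ^+ 2 <= 2 * S.
  apply: le_trans (ler_sum _ (fun i _ => ht i)) _.
  rewrite big_split /= -mulr_suml hr2 -mulr_sumr big_split /= -!mulr_sumr.
  rewrite sumrB hu hv subrr.
  have -> : \sum_i 2 * u i * v i = 2 * \sum_i u i * v i.
    by rewrite mulr_sumr; apply: eq_bigr => i _; rewrite mulrA.
  by rewrite huv !(mulr0, addr0).
have S0 : 0 <= S by rewrite /S; apply: addr_ge0; [apply: addr_ge0|]; apply: sqr_ge0.
have hS : S <= 2 * n%:R.
  have := cs_sum _ t; rewrite -hSt => h.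
  have n0 : (0:R) <= n%:R by apply: ler0n.
  have h2n := ler_wpM2l n0 hT2.
  have h3 : S ^+ 2 <= n%:R * (2 * S) by apply: le_trans h h2n.
  nra.
have h3 : 18 * T <= 12 * S.
  apply: le_trans h1 _; rewrite h2 /S.
  rewrite -/X0 -/X1 -/X2; have := sqr_ge0 X1; have := sqr_ge0 X2; have := sqr_ge0 (\sum_i f1 i); have := sqr_ge0 (\sum_i f2 i); lra.
lra.
Qed.
End L.
Section P.
Variable F : fieldType.

Lemma prod_XsubC_perm (s t : seq F) :
  \prod_(x <- s) ('X - x%:P) = \prod_(x <- t) ('X - x%:P) -> perm_eq s t.
Proof.
elim: s t => [|a s IH] t.
  rewrite big_nil => /(congr1 (fun p : {poly F} => size p)) /=; rewrite size_poly1 size_prod_XsubC.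
  by case: t.
rewrite big_cons => h.
have at_ : a \in t.
  by rewrite -root_prod_XsubC -h rootM root_XsubC eqxx.
have pt := perm_to_rem at_.
rewrite (perm_big _ pt) /= big_cons in h.
have h' := mulfI (negbT (polyXsubC_eq0 a)) h.
rewrite (permPr pt) perm_cons; exact: IH.
Qed.

Lemma char_poly_sim n (Q D : 'M[F]_n) : Q \in unitmx ->
  char_poly (invmx Q *m D *m Q) = char_poly D.
Proof.
move=> Qu.
rewrite /char_poly /char_poly_mx.
set Qi := map_mx polyC (invmx Q). set Q' := map_mx polyC Q.
have hQQ : Qi *m Q' = 1%:M by rewrite -map_mxM mulVmx // map_mx1.
have -> : map_mx polyC (invmx Q *m D *m Q) = Qi *m map_mx polyC D *m Q'
  by rewrite !map_mxM.
have E : ('X%:M : 'M_n) - Qi *m map_mx polyC D *m Q' = Qi *m ('X%:M - map_mx polyC D) *m Q'.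
  rewrite mulmxBr mulmxBl; congr (_ - _).
  by rewrite -mulmxA -scalar_mxC mulmxA hQQ mul1mx.
rewrite E !det_mulmx mulrAC -det_mulmx hQQ det1 mul1r //.
Qed.
End P.
Section S.
Variable R : rcfType.
Local Notation C := (R[i]).
Local Notation toC := (real_complex R).

Lemma toC_real (x : R) : toC x \is Num.real.
Proof. apply/complex_realP; by exists x. Qed.

Lemma real_spectral n (A : 'M[R]_n) : A^T = A ->
  exists Q : 'M[R]_n, exists d : 'rV[R]_n, Q \in unitmx /\ Q *m A = diag_mx d *m Q.
Proof.
move=> Asym.
set AC := map_mx toC A.
have ACsym : AC \is symmetricmx.
  apply/is_hermitianmxP; rewrite expr0 scale1r map_mx_id //. by rewrite /AC map_trmx Asym.
have ACreal : AC \is a realmx.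
  by apply/mxOverP => i j; rewrite mxE; exact: toC_real.
have ACh := realsym_hermsym ACsym ACreal.
have ACn := hermitian_normalmx ACh.
have Eq := orthomx_spectralP ACn.
have Pu := spectral_unit AC.
have spreal := hermitian_spectral_diag_real ACh.
have sim : similar_in unitmx AC (diag_mx (spectral_diag AC)).
  exists (spectralmx AC); first exact: Pu.
  apply/(similarLR Pu).
  rewrite conjumx; last by rewrite unitmx_inv.
  rewrite invmxK; exact: Eq.
have Dreal : diag_mx (spectral_diag AC) \is a realmx.
  apply/mxOverP => i j; rewrite mxE; case: (i == j).
    rewrite mulr1n; move/mxOverP: spreal; exact.
  rewrite mulr0n; exact: real0.
have := @real_similar C n AC (diag_mx (spectral_diag AC)) sim ACreal Dreal.
move=> [Q' /andP [Q'real Q'u] Q'sim].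
have eqQ := (similarP Q'u) Q'sim.
set sp := spectral_diag AC in eqQ spreal.
pose Q := map_mx (@complex.Re R) Q'. pose d := map_mx (@complex.Re R) sp.
have Q'E : Q' = map_mx toC Q.
  apply/matrixP => i j; rewrite !mxE.
  by have /mxOverP/(_ i j)/complex_realP [k ->] := Q'real.
have spE : sp = map_mx toC d.
  apply/matrixP => i j; rewrite !mxE.
  by have /mxOverP/(_ i j)/complex_realP [k ->] := spreal.
exists Q, d; split.
  by rewrite -(map_unitmx toC) -Q'E.
apply: (map_mx_inj (f := toC)).
by rewrite !map_mxM map_diag_mx -Q'E -spE.
Qed.
End S.

Lemma card_count n (P : pred 'I_n) : #|P| = count P (enum 'I_n).
Proof. by rewrite enumT cardE /enum_mem size_filter. Qed.

Section Eig.
Variable R : rcfType.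
Variable n : nat.
Variable A : 'M[R]_n.
Hypothesis Asym : forall i j, A i j = A j i.

Definition ip (f g : 'I_n -> R) := \sum_k f k * g k.
Definition eig (f : 'I_n -> R) (a : R) := forall j, \sum_k f k * A k j = a * f j.

Lemma eig_quad f g a : eig f a -> \sum_i \sum_j A i j * (f i * g j) = a * ip f g.
Proof.
move=> hf; rewrite exchange_big /ip mulr_sumr /=; apply: eq_bigr => j _.
transitivity ((\sum_i f i * A i j) * g j).
  by rewrite mulr_suml; apply: eq_bigr => i _; ring.
by rewrite hf mulrA.
Qed.

Lemma eig_quad_r f g b : eig g b -> \sum_i \sum_j A i j * (f i * g j) = b * ip f g.
Proof.
move=> hg; rewrite /ip mulr_sumr /=; apply: eq_bigr => i _.
transitivity (f i * \sum_j g j * A j i).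
  by rewrite mulr_sumr; apply: eq_bigr => j _; rewrite Asym; ring.
by rewrite hg; ring.
Qed.

Lemma eig_orth f g a b : eig f a -> eig g b -> a != b -> ip f g = 0.
Proof.
move=> hf hg hab; have h := @eig_quad f g a hf; rewrite (@eig_quad_r f g b hg) in h.
have : (a - b) * ip f g = 0 by rewrite mulrBl h subrr.
by move/eqP; rewrite mulf_eq0 subr_eq0 (negbTE hab) /= => /eqP.
Qed.

Lemma eig_comb f g a c : eig f a -> eig g a -> eig (fun k => f k - c * g k) a.
Proof.
move=> hf hg j.
transitivity (\sum_k f k * A k j - c * \sum_k g k * A k j).
  rewrite mulr_sumr -sumrB; apply: eq_bigr => k _; ring.
by rewrite hf hg; ring.
Qed.

Lemma eig_scale f a c : eig f a -> eig (fun k => c * f k) a.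
Proof.
move=> hf j; transitivity (c * \sum_k f k * A k j).
  by rewrite mulr_sumr; apply: eq_bigr => k _; ring.
by rewrite hf; ring.
Qed.

Lemma ip_self_ge0 f : 0 <= ip f f.
Proof. by apply: sumr_ge0 => k _; rewrite -expr2 sqr_ge0. Qed.

Lemma ip_self_eq0 f : ip f f = 0 -> forall k, f k = 0.
Proof.
move=> h k.
have hk : f k * f k = 0.
  apply: (@psumr_eq0P _ _ predT (fun k => f k * f k)) => //.
  by move=> i _; rewrite -expr2 sqr_ge0.
by move/eqP: hk; rewrite mulf_eq0 orbb => /eqP.
Qed.

End Eig.

Arguments ip {R n} f g.
Arguments eig {R n} A f a.
Arguments eig_quad {R n A f g a}.
Arguments eig_quad_r {R n A} Asym {f g b}.
Arguments eig_orth {R n A} Asym {f g a b}.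
Arguments eig_comb {R n A f g a c}.
Arguments eig_scale {R n A f a} c.
Arguments ip_self_ge0 {R n} f.
Arguments ip_self_eq0 {R n f}.
Arguments main_L {R n u v}.
Arguments sqsum {R n} f.

Theorem corollary2p2 (R : realType) (n : nat) (e : rel 'I_n) (s : seq R) :
  (2 <= n)%N -> symmetric e -> irreflexive e ->
  eigenvalue_list (adjmx R e) s -> sorted >=%R s ->
  - (n%:R / 3) <= s`_(n - 2).
Proof.
move=> hn hsym _ hev hsort.
set A := adjmx R e.
have Aij i j : A i j = (e i j)%:R by rewrite /A /adjmx mxE.
have Asym : forall i j, A i j = A j i by move=> i j; rewrite !Aij hsym.
have AT : A^T = A by apply/matrixP => i j; rewrite mxE Asym.
have [Q [d [Qu QA]]] := @real_spectral _ _ A AT.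
have Aeq : A = invmx Q *m diag_mx d *m Q by rewrite -mulmxA -QA mulKmx.
have hcp : char_poly A = \prod_(i < n) ('X - (d 0 i)%:P).
  rewrite Aeq char_poly_sim // char_poly_trig ?diag_mx_is_trig //.
  by apply: eq_bigr => i _; rewrite mxE eqxx mulr1n.
have hperm : perm_eq s [seq d 0 i | i <- enum 'I_n].
  apply: prod_XsubC_perm; rewrite -hev hcp big_map big_enum /=.
  by apply: eq_bigl.
have hsz : size s = n by rewrite (perm_size hperm) size_map size_enum_ord.
set lam := s`_(n - 2).
have hlast : s`_(n - 1) <= lam.
  have tr : transitive (>=%R : rel R) by move=> y x z h1 h2; exact: le_trans h2 h1.
  have := @sorted_leq_nth _ _ tr (fun x : R => lexx x) 0 s hsort (n - 2)%N (n - 1)%N.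
  rewrite !inE hsz; apply; lia.
have hcount : (1 < count (fun x : R => (x <= lam)%R) s)%N.
  have hd : drop (n - 2) s = [:: s`_(n - 2); s`_(n - 1)].
    rewrite (drop_nth 0); last by rewrite hsz; lia.
    rewrite (drop_nth 0); last by rewrite hsz; lia.
    rewrite drop_oversize; last by rewrite hsz; lia.
    by have -> : (n - 2).+1 = (n - 1)%N by lia.
  rewrite -(cat_take_drop (n - 2) s) count_cat hd /= lexx hlast /=.
  lia.
have hcard : (1 < #|[pred i : 'I_n | (d 0 i <= lam)%R]|)%N.
  by move: hcount; rewrite (permP hperm) count_map card_count.
have [i1 [i2 [hi1 hi2 hne]]] := card_gt1P hcard.
rewrite !inE /= in hi1 hi2.
pose x := fun k => Q i1 k. pose y0 := fun k => Q i2 k.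
have eigQ i : eig A (fun k => Q i k) (d 0 i).
  move=> j; have := congr1 (fun M : 'M[R]_n => M i j) QA.
  by rewrite /= mxE mul_diag_mx mxE.
have rowQ (w : 'rV[R]_n) : (forall k, (w *m Q) 0 k = 0) -> w = 0.
  move=> h; apply/eqP; rewrite -(mulmx_free_eq0 w (B:=Q)); last by rewrite row_free_unit.
  by apply/eqP/matrixP => i k; rewrite ord1 [RHS]mxE; exact: h.
have ipC f g : ip f g = ip g f by rewrite /ip; apply: eq_bigr => k _; rewrite mulrC.
have xnz : ip x x != 0.
  apply/negP => /eqP h0; have hx := ip_self_eq0 h0.
  have : delta_mx 0 i1 = 0 :> 'rV[R]_n.
    by apply: rowQ => k; rewrite -rowE mxE; exact: hx k.
  by move/matrixP/(_ 0 i1); rewrite !mxE !eqxx /= => /eqP; rewrite oner_eq0.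
pose c := ip y0 x / ip x x.
pose y := fun k => y0 k - c * x k.
have ynz : ip y y != 0.
  apply/negP => /eqP h0; have hy := ip_self_eq0 h0.
  have : delta_mx 0 i2 - c *: delta_mx 0 i1 = 0 :> 'rV[R]_n.
    apply: rowQ => k; rewrite mulmxBl -scalemxAl -!rowE !mxE; exact: hy k.
  move/matrixP/(_ 0 i2); rewrite !mxE !eqxx (eq_sym i2 i1) (negbTE hne) /=.
  by rewrite mulr0 subr0 => /eqP; rewrite oner_eq0.
have eigx : eig A x (d 0 i1) := eigQ i1.
have eigy : eig A y (d 0 i2).
  have [hd|hd] := eqVneq (d 0 i1) (d 0 i2).
    apply: eig_comb; first exact: eigQ i2.
    by rewrite -hd.
  have h0 : ip y0 x = 0 by rewrite ipC; apply: (eig_orth Asym eigx (eigQ i2) hd).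
  move=> j; rewrite /y /c h0 mul0r.
  have -> : \sum_k (y0 k - 0 * x k) * A k j = \sum_k y0 k * A k j.
    by apply: eq_bigr => k _; rewrite mul0r subr0.
  by rewrite mul0r subr0; exact: eigQ i2 j.
have hyx : ip y x = 0.
  transitivity (ip y0 x - c * ip x x).
    by rewrite /ip mulr_sumr -sumrB; apply: eq_bigr => k _; rewrite /y; ring.
  by rewrite /c divfK // subrr.
pose nx := Num.sqrt (ip x x). pose ny := Num.sqrt (ip y y).
have nx2 : nx ^+ 2 = ip x x by rewrite sqr_sqrtr // ip_self_ge0.
have ny2 : ny ^+ 2 = ip y y by rewrite sqr_sqrtr // ip_self_ge0.
have nxnz : nx != 0 by apply: contraNneq xnz => h; rewrite -nx2 h expr0n.
have nynz : ny != 0 by apply: contraNneq ynz => h; rewrite -ny2 h expr0n.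
pose u := fun k => nx^-1 * x k. pose v := fun k => ny^-1 * y k.
have hu : ip u u = 1.
  transitivity (nx^-1 * nx^-1 * ip x x).
    by rewrite /ip mulr_sumr; apply: eq_bigr => k _; rewrite /u; ring.
  rewrite -nx2; field; exact: nxnz.
have hv : ip v v = 1.
  transitivity (ny^-1 * ny^-1 * ip y y).
    by rewrite /ip mulr_sumr; apply: eq_bigr => k _; rewrite /v; ring.
  rewrite -ny2; field; exact: nynz.
have huv : ip u v = 0.
  transitivity (nx^-1 * ny^-1 * ip x y).
    by rewrite /ip mulr_sumr; apply: eq_bigr => k _; rewrite /u /v; ring.
  by rewrite ipC hyx mulr0.
have eigu : eig A u (d 0 i1) := eig_scale _ eigx.
have eigv : eig A v (d 0 i2) := eig_scale _ eigy.
have sq f : ip f f = \sum_k f k ^+ 2 by rewrite /ip; apply: eq_bigr => k _; rewrite expr2.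
have hu2 : \sum_k u k ^+ 2 = 1 by rewrite -sq.
have hv2 : \sum_k v k ^+ 2 = 1 by rewrite -sq.
have hL := main_L hu2 hv2 huv.
pose p := fun i j => u i * u j + v i * v j.
have hquad : \sum_i \sum_j A i j * p i j = d 0 i1 + d 0 i2.
  transitivity (\sum_i \sum_j A i j * (u i * u j) + \sum_i \sum_j A i j * (v i * v j)).
    rewrite -big_split; apply: eq_bigr => i _; rewrite -big_split; apply: eq_bigr => j _.
    by rewrite /p mulrDr.
  by rewrite (eig_quad eigu) (eig_quad eigv) hu hv !mulr1.
have hlow : \sum_i \sum_j (2^-1 * p i j - 2^-1 * `|p i j|) <= \sum_i \sum_j A i j * p i j.
  apply: ler_sum => i _; apply: ler_sum => j _.
  have h1 := ler_norm (p i j); have h2 := ler_norm (- p i j); rewrite normrN in h2.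
  rewrite Aij; case: (e i j) => /=; rewrite ?mul1r ?mul0r; lra.
have hsplit : \sum_i \sum_j (2^-1 * p i j - 2^-1 * `|p i j|) =
    2^-1 * \sum_i \sum_j p i j - 2^-1 * \sum_i \sum_j `|p i j|.
  rewrite !mulr_sumr -sumrB; apply: eq_bigr => i _.
  by rewrite sumrB -!mulr_sumr.
have hP : \sum_i \sum_j p i j = (\sum_i u i) ^+ 2 + (\sum_i v i) ^+ 2.
  rewrite !sqsum -big_split; apply: eq_bigr => i _; by rewrite -big_split.
have hP0 : 0 <= \sum_i \sum_j p i j by rewrite hP; apply: addr_ge0; apply: sqr_ge0.
rewrite hsplit in hlow; rewrite hquad in hlow.
move: hL; rewrite -/p => hL.
have n0 : (0 : R) <= n%:R by apply: ler0n.
lra.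
Qed.
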